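(* Every Move-To-Front-Every-Other-Access algorithm (for any choice of initial bits) has competitive ratio at least $2.5$ (full cost model): for every such algorithm $A$, every $c<2.5$ and every constant $b$, there exist a list and a request sequence $\sigma$ with $A(\sigma)>c\cdot\mathrm{OPT}(\sigma)+b$.
   Context: Static list update: a list of distinct items in some initial order; serving a request to the item at position $i$ (from the front) costs $i$ (full cost model); the accessed item may be moved closer to the front for free (free exchange); two adjacent items may be swapped at cost $1$ (paid exchange). $A(\sigma)$ is the total cost of algorithm $A$ and $\mathrm{OPT}(\sigma)$ the minimum cost of any offline algorithm from the same initial list. A Move-To-Front-Every-Other-Access (MTF2) algorithm maintains one bit per item, with arbitrary initial values; on each request to an item $z$ it flips the bit of $z$, and if the bit becomes $0$ it moves $z$ to the front (free exchange), otherwise it leaves the list unchanged; it makes no paid exchanges. (MTFO is the case with all initial bits $1$, MTFE with all initial bits $0$.) *)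

(* Defs.v *)
From mathcomp Require Import all_boot.
From Stdlib Require Import Reals.

Set Implicit Arguments.
Unset Strict Implicit.
Unset Printing Implicit Defensive.

(* Items are natural numbers; a list is a [seq nat] (front = head).
   The position of item x in list L (1-based) is [index x L + 1]. *)

(* Paid exchange: swap the items at (0-based) positions i and i+1
   (no-op if out of range; it is still charged cost 1). *)
Definition swap_adj (L : seq nat) (i : nat) : seq nat :=
  if i.+1 < size L then take i L ++ nth 0 L i.+1 :: nth 0 L i :: drop i.+2 L
  else L.

(* Move item x to (0-based) position j of the list (free exchange when
   j <= current position of x). *)
Definition move_to (x j : nat) (L : seq nat) : seq nat :=
  take j (rem x L) ++ x :: drop j (rem x L).

(* offline_cost L sigma k : some offline algorithm, starting from list L,
   serves sigma with total cost k.  Before each request it performs any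
   sequence [sw] of paid adjacent exchanges (cost 1 each), then pays the
   position of the requested item, then may move that item to any position
   closer to the front for free. *)
Inductive offline_cost : seq nat -> seq nat -> nat -> Prop :=
| off_nil L : offline_cost L [::] 0
| off_cons L r s (sw : seq nat) (j : nat) k :
    let L1 := foldl swap_adj L sw in
    j <= index r L1 ->
    offline_cost (move_to r j L1) s k ->
    offline_cost L (r :: s) (size sw + (index r L1).+1 + k).

Definition is_OPT (L sigma : seq nat) (opt : nat) : Prop :=
  offline_cost L sigma opt /\ (forall k, offline_cost L sigma k -> opt <= k).

Definition mtf (x : nat) (L : seq nat) : seq nat := x :: rem x L.

Fixpoint mtf2_cost (bits : nat -> bool) (L sigma : seq nat) : nat :=
  match sigma with
  | [::] => 0
  | z :: s =>
      let nb := ~~ bits z in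
      let bits' := fun y => if y == z then nb else bits y in
      let L' := if nb then L else mtf z L in
      (index z L).+1 + mtf2_cost bits' L' s
  end.

(* Main.v *)
Require Import Defs.
From mathcomp Require Import all_boot zify.
From Stdlib Require Import Reals Lra.

Lemma rem_mid (x : nat) (s1 s2 : seq nat) : x \notin s1 -> rem x (s1 ++ x :: s2) = s1 ++ s2.
Proof. elim: s1 => [|y s1 IH] /=; first by rewrite eqxx.
rewrite in_cons negb_or => /andP[ne nin]. by rewrite eq_sym (negbTE ne) IH. Qed.

Lemma index_mid (x : nat) (s1 s2 : seq nat) : x \notin s1 -> index x (s1 ++ x :: s2) = size s1.
Proof. by move=> h; rewrite index_cat (negbTE h) index_head addn0. Qed.

Lemma move_same r L : r \in L -> move_to r (index r L) L = L.
Proof.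
move=> rL; rewrite /move_to remE.
have hs : size (take (index r L) L) = index r L.
  by rewrite size_take index_mem rL.
rewrite take_size_cat // drop_size_cat //.
set i := index r L.
have iL : i < size L by rewrite index_mem.
by rewrite -[in RHS](cat_take_drop i L) (drop_nth r iL) nth_index.
Qed.

Lemma mtf2_cons b L z s : mtf2_cost b L (z :: s) =
  (index z L).+1 + mtf2_cost (fun y => if y == z then ~~ b z else b y)
     (if ~~ b z then L else mtf z L) s.
Proof. by []. Qed.

Definition runs (U : seq nat) := flatten [seq [:: y; y; y] | y <- rev U].
Lemma runs_rcons U y : runs (rcons U y) = [:: y; y; y] ++ runs U.
Proof. by rewrite /runs rev_rcons. Qed.

Lemma mtf_mid (y : nat) P U : y \notin P -> mtf y (P ++ y :: U) = y :: P ++ U.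
Proof. by move=> h; rewrite /mtf rem_mid. Qed.

Lemma index_rc (y : nat) X : y \notin X -> index y (rcons X y) = size X.
Proof. by move=> h; rewrite -cats1 index_mid. Qed.
Lemma mtf_rc (y : nat) X : y \notin X -> mtf y (rcons X y) = y :: X.
Proof. by move=> h; rewrite /mtf -cats1 rem_mid ?cats0. Qed.

Lemma mtf2_runs U : forall (P : seq nat) (b : nat -> bool) (s : seq nat), uniq (P ++ U) ->
  (forall z, z \in P -> b z) -> (forall z, z \in U -> ~~ b z) ->
  exists b' : nat -> bool, (forall z, z \in U ++ P -> b' z) /\
  mtf2_cost b (P ++ U) (runs U ++ s) =
    size U * (2 * size (P ++ U)).+1 + mtf2_cost b' (U ++ P) s.
Proof.
elim/last_ind: U => [|U y IH] P b s uq hP hU.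
  by exists b; rewrite cats0 /=; split.
have yU : y \in rcons U y by rewrite mem_rcons mem_head.
have by0 := hU y yU.
move: (uq); rewrite -rcons_cat rcons_uniq => /andP[yPU uqPU].
have yP : y \notin P by move: yPU; rewrite mem_cat negb_or => /andP[].
rewrite runs_rcons -catA /= (negbTE by0) /= eqxx /= index_rc // mtf_rc //= eqxx /=.
set b3 := (fun y0 : nat => _).
have yU' : y \notin U by move: yPU; rewrite mem_cat negb_or => /andP[].
have h1 : uniq ((y :: P) ++ U) by rewrite /= yPU uqPU.
have h2 : forall z, z \in y :: P -> b3 z.
  move=> z; rewrite in_cons /b3; case: (z == y) => //= zP; exact: hP.
have h3 : forall z, z \in U -> ~~ b3 z.
  move=> z zU; rewrite /b3; have -> : (z == y) = false.
    by apply/negbTE; apply: contraNneq yU' => <-.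
  by apply: hU; rewrite mem_rcons in_cons zU orbT.
have [b' [hb' ->]] := IH (y :: P) b3 s h1 h2 h3.
exists b'; split.
- by move=> z; rewrite cat_rcons; exact: hb'.
- rewrite cat_rcons !size_rcons /= !size_cat /=. lia.
Qed.


Fixpoint sing (q r : nat) : nat := if r is r'.+1 then q.+1 + sing q.+1 r' else 0.

Lemma mtf2_sing R : forall (Q : seq nat) (b : nat -> bool) (s : seq nat), uniq (Q ++ R) ->
  (forall z, z \in Q -> ~~ b z) -> (forall z, z \in R -> b z) ->
  exists b' : nat -> bool, (forall z, z \in Q ++ R -> ~~ b' z) /\
  mtf2_cost b (rev Q ++ R) (R ++ s) = sing (size Q) (size R) + mtf2_cost b' (rev (Q ++ R)) s.
Proof.
elim: R => [|y R IH] Q b s uq hQ hR.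
  by exists b; rewrite !cats0.
have by1 := hR y (mem_head _ _).
move: (uq); rewrite -cat_rcons => uq'.
move: (uq'); rewrite -cats1 -catA cat_uniq => /and3P[_ nh _].
have yQ : y \notin Q.
  move: uq; rewrite cat_uniq => /and3P[_ + _]; apply: contra => yQ.
  by apply/hasP; exists y => //; rewrite mem_head.
have yR : y \notin R by move: uq; rewrite cat_uniq /= => /and4P[_ _ + _].
rewrite /= by1 /= index_mid ?mem_rev // size_rev mtf_mid ?mem_rev //.
set b1 := (fun y0 : nat => _).
have h2 : forall z, z \in rcons Q y -> ~~ b1 z.
  move=> z; rewrite mem_rcons in_cons /b1; case: (z == y) => //= zQ; exact: hQ.
have h3 : forall z, z \in R -> b1 z.
  move=> z zR; rewrite /b1; have -> : (z == y) = false.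
    by apply/negbTE; apply: contraNneq yR => <-.
  by apply: hR; rewrite in_cons zR orbT.
have [b' [hb' E]] := IH (rcons Q y) b1 s uq' h2 h3.
move: E; rewrite rev_rcons cat_rcons /= => ->.
exists b'; split; first by move=> z; rewrite -cat_rcons; exact: hb'.
by rewrite size_rcons addnA.
Qed.

Lemma mtf2_pre U : forall (P : seq nat) (b : nat -> bool) (s : seq nat), uniq (P ++ U) ->
  (forall z, z \in P -> ~~ b z) -> (forall z, z \in U -> b z) ->
  exists b' : nat -> bool, (forall z, z \in U ++ P -> ~~ b' z) /\
  mtf2_cost b' (U ++ P) s <= mtf2_cost b (P ++ U) (rev U ++ s).
Proof.
elim/last_ind: U => [|U y IH] P b s uq hP hU.
  by exists b; rewrite cats0 /=; split.
have yU : y \in rcons U y by rewrite mem_rcons mem_head.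
have by1 := hU y yU.
move: (uq); rewrite -rcons_cat rcons_uniq => /andP[yPU uqPU].
have yU' : y \notin U by move: yPU; rewrite mem_cat negb_or => /andP[].
rewrite rev_rcons /= by1 /= index_rc // mtf_rc //.
set b1 := (fun y0 : nat => _).
have h1 : uniq ((y :: P) ++ U) by rewrite /= yPU uqPU.
have h2 : forall z, z \in y :: P -> ~~ b1 z.
  move=> z; rewrite in_cons /b1; case: (z == y) => //= zP; exact: hP.
have h3 : forall z, z \in U -> b1 z.
  move=> z zU; rewrite /b1; have -> : (z == y) = false.
    by apply/negbTE; apply: contraNneq yU' => <-.
  by apply: hU; rewrite mem_rcons in_cons zU orbT.
have [b' [hb' E]] := IH (y :: P) b1 s h1 h2 h3.
exists b'; split; first by move=> z; rewrite cat_rcons; exact: hb'.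
rewrite cat_rcons; apply: leq_trans E _; exact: leq_addl.
Qed.

Definition H (ys : seq nat) := runs ys ++ ys.
Fixpoint hseq (m : nat) (ys : seq nat) : seq nat :=
  if m is m'.+1 then H ys ++ hseq m' (rev ys) else [::].
Definition Cst n := n * (2 * n).+1 + sing 0 n.

Lemma mtf2_chain m : forall (ys : seq nat) (b : nat -> bool), uniq ys ->
  (forall z, z \in ys -> ~~ b z) -> mtf2_cost b ys (hseq m ys) = m * Cst (size ys).
Proof.
elim: m => [|m IH] ys b uq hb; first by [].
rewrite /= /H -catA.
have [b1 [hb1 E1]] := mtf2_runs ys [::] b (ys ++ hseq m (rev ys)) uq (fun z (h : z \in [::]) => ltac:(done)) hb.
rewrite /= cats0 in E1 hb1; rewrite E1.
have [b2 [hb2 E2]] := mtf2_sing ys [::] b1 (hseq m (rev ys)) uq (fun z (h : z \in [::]) => ltac:(done)) hb1.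
rewrite /= in E2 hb2; rewrite E2.
rewrite IH ?rev_uniq //; last by move=> z; rewrite mem_rev; exact: hb2.
rewrite size_rev /Cst mulSn; lia.
Qed.

Lemma off_step L r s j k : j <= index r L -> offline_cost (move_to r j L) s k ->
  offline_cost L (r :: s) ((index r L).+1 + k).
Proof. move=> hj h; have := @off_cons L r s [::] j k hj h; by rewrite /= add0n. Qed.

Lemma off_nomove (sg : seq nat) : forall L s k, all (fun x => x \in L) sg ->
  offline_cost L s k -> exists k0, k0 <= size L * size sg /\ offline_cost L (sg ++ s) (k0 + k).
Proof.
elim: sg => [|r sg IH] L s k /= hall h; first by exists 0.
move/andP: hall => [rL hall].
have [k0 [hk0 h0]] := IH L s k hall h.
exists ((index r L).+1 + k0); split.
  have : index r L < size L by rewrite index_mem.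
  rewrite mulnS; move: hk0; set X := size L * size sg; set Y := size L; set Z := index r L; clearbody X Y Z; clear; lia.
rewrite -addnA; apply: (off_step _ _ _ (index r L)) => //.
by rewrite move_same.
Qed.

Fixpoint orun (p u : nat) : nat := if u is u'.+1 then p + 3 + orun p.+1 u' else 0.

Lemma off_runs U : forall (P s : seq nat) k, uniq (P ++ U) -> offline_cost (U ++ P) s k ->
  offline_cost (P ++ rev U) (runs U ++ s) (orun (size P) (size U) + k).
Proof.
elim/last_ind: U => [|U y IH] P s k uq h.
  by have -> : P ++ rev [::] = P by rewrite cats0.

move: (uq); rewrite -rcons_cat rcons_uniq => /andP[yPU uqPU].
have yP : y \notin P by move: yPU; rewrite mem_cat negb_or => /andP[].
have h1 : uniq ((y :: P) ++ U) by rewrite /= yPU uqPU.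
rewrite cat_rcons in h.
have := IH (y :: P) s k h1 h => /= hh.
rewrite runs_rcons rev_rcons size_rcons /=.
have e : size P + 3 + orun (size P).+1 (size U) + k =
   (index y (P ++ y :: rev U)).+1 + ((index y (y :: P ++ rev U)).+1 +
     ((index y (y :: P ++ rev U)).+1 + (orun (size P).+1 (size U) + k))).
  rewrite index_mid // /= eqxx /=; lia.
rewrite e; apply: (off_step _ _ _ (0)) => //.
rewrite /move_to take0 drop0 rem_mid // cat0s.
apply: (off_step _ _ _ (0)) => //.
rewrite /move_to take0 drop0 cat0s rem_cons eqxx.
apply: (off_step _ _ _ (0)) => //.
by rewrite /move_to take0 drop0 cat0s rem_cons eqxx.
Qed.

Lemma off_sing R : forall (A s : seq nat) k, uniq (A ++ R) -> offline_cost (A ++ R) s k ->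
  offline_cost (A ++ R) (R ++ s) (sing (size A) (size R) + k).
Proof.
elim: R => [|y R IH] A s k uq h; first by [].
have yA : y \notin A.
  move: uq; rewrite cat_uniq => /and3P[_ + _]; apply: contra => yA.
  by apply/hasP; exists y => //; rewrite mem_head.
have uq' : uniq (rcons A y ++ R) by rewrite cat_rcons.
have h' : offline_cost (rcons A y ++ R) s k by rewrite cat_rcons.
have := IH (rcons A y) s k uq' h'; rewrite cat_rcons size_rcons => hh.
have e := index_mid _ _ R yA; rewrite /= -addnA -{1}e.
apply: (off_step _ _ _ (index y (A ++ y :: R))) => //.
by rewrite move_same // mem_cat mem_head orbT.
Qed.

Definition Dst n := orun 0 n + sing 0 n.

Lemma off_chain m : forall ys : seq nat, uniq ys ->
  offline_cost (rev ys) (hseq m ys) (m * Dst (size ys)).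
Proof.
elim: m => [|m IH] ys uq; first exact: off_nil.
rewrite /= /H -catA.
have := IH (rev ys); rewrite rev_uniq revK size_rev => /(_ uq) h.
have := off_sing ys [::] (hseq m (rev ys)) _ uq h => /= h2.
have h2' : offline_cost (ys ++ [::]) (ys ++ hseq m (rev ys)) (sing 0 (size ys) + m * Dst (size ys)) by rewrite cats0.
have := off_runs ys [::] _ _ uq h2' => /= h3.
by rewrite mulSn /Dst -addnA.
Qed.

Lemma size_runs U : size (runs U) = 3 * size U.
Proof. elim/last_ind: U => [|U y IH] //; rewrite runs_rcons size_cat IH size_rcons /=; lia. Qed.

Lemma all_runs (L U : seq nat) : all (fun x => x \in L) U -> all (fun x => x \in L) (runs U).
Proof.
elim/last_ind: U => [|U y IH] // ; rewrite all_rcons runs_rcons => /andP[yL hU].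
by rewrite /= yL IH.
Qed.

Lemma all_hseq m : forall (L ys : seq nat), all (fun x => x \in L) ys -> all (fun x => x \in L) (hseq m ys).
Proof.
elim: m => [|m IH] L ys h //=.
by rewrite /H !all_cat all_runs // h IH // all_rev.
Qed.

Lemma sing2 r : forall q, 2 * sing q r = 2 * q * r + r * r + r.
Proof. elim: r => [|r IH] q /=; first lia. rewrite mulnDr IH; lia. Qed.

Lemma orun2 u : forall p, 2 * orun p u = 2 * p * u + u * u + 5 * u.
Proof. elim: u => [|u IH] p /=; first lia. rewrite mulnDr IH; lia. Qed.

Lemma opt_exists L s k : offline_cost L s k -> exists opt, is_OPT L s opt /\ opt <= k.
Proof.
elim: k {-2}k (leqnn k) => [|K IH] k hk h.
  exists k; split => //; split => // k' _; move: hk; lia.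
case: (Classical_Prop.classic (exists k', k' < k /\ offline_cost L s k')) => [[k' [lt h']]|nex].
  have [o [ho lo]] := IH k' ltac:(lia) h'. exists o; split => //; lia.
exists k; split => //; split => // k' h'.
case: (leqP k k') => // lt; exfalso; apply: nex; by exists k'.
Qed.

Lemma labels (bits : nat -> bool) n : exists (xs : seq nat) (be : bool),
  uniq xs /\ size xs = n /\ forall x, x \in xs -> bits x = be.
Proof.
case: (Classical_Prop.classic (forall N, exists m, N <= m /\ bits m = false)) => [inf|fin].
  suff: exists xs M, uniq xs /\ size xs = n /\ forall x, x \in xs -> bits x = false /\ x < M.
    move=> [xs [M [u [s hx]]]]; exists xs, false; split => //; split => // x; by case/hx.
  elim: n => [|n [xs [M [u [s hx]]]]]; first by exists [::], 0.
  have [m [hm bm]] := inf M.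
  exists (m :: xs), m.+1; split; last split; first 1 last.
  - by rewrite /= s.
  - move=> x; rewrite in_cons => /orP[/eqP ->|/hx [bx lx]]; split => //; lia.
  - rewrite /= u andbT; apply/negP => /hx [_]; lia.
have [N hN] : exists N, forall m, N <= m -> bits m = true.
  apply: Classical_Prop.NNPP => hn; apply: fin => N.
  apply: Classical_Prop.NNPP => hn2; apply: hn; exists N => m hm.
  case E: (bits m) => //; exfalso; apply: hn2; by exists m.
exists (iota N n), true; split; first exact: iota_uniq.
split; first exact: size_iota.
move=> x; rewrite mem_iota => /andP[h _]; exact: hN.
Qed.

Lemma main_nat (bits : nat -> bool) n m : exists (L sg : seq nat) opt,
  uniq L /\ all (fun x => x \in L) sg /\ is_OPT L sg opt /\
  m.+1 * Cst n <= mtf2_cost bits L sg /\ opt <= n * (5 * n) + m * Dst n.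
Proof.
have [xs [be [uq [sz hb]]]] := labels bits n.
have allxs : all (fun x => x \in xs) xs by apply/allP.
have hoff := off_chain m (rev xs); rewrite revK rev_uniq size_rev sz in hoff.
move: (hoff uq) => {}hoff.
case: be hb => hb.
- exists xs, (rev xs ++ hseq m.+1 xs).
  have alls : all (fun x => x \in xs) (rev xs ++ H xs).
    by rewrite /H !all_cat all_rev allxs all_runs.
  have [k0 [hk0 hk]] := off_nomove (rev xs ++ H xs) xs (hseq m (rev xs)) (m * Dst n) alls hoff.
  rewrite -catA in hk.
  have [o [ho lo]] := opt_exists _ _ _ hk.
  exists o; split => //; split.
    by rewrite all_cat all_rev allxs all_hseq.
  split => //; split.
    have [b' [hb' E]] := mtf2_pre xs [::] bits (hseq m.+1 xs) uq (fun z (h : z \in [::]) => ltac:(done)) (fun z h => ltac:(by rewrite hb)).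
    rewrite cats0 in hb' E.
    rewrite mtf2_chain // in E; rewrite -sz; exact: E.
  move: hk0; rewrite size_cat size_rev /H size_cat size_runs sz; move=> hk0.
  have : k0 <= n * (5 * n) by apply: (leq_trans hk0); rewrite leq_mul2l; apply/orP; right; lia.
  lia.
- exists xs, (hseq m.+1 xs).
  have alls : all (fun x => x \in xs) (H xs).
    by rewrite /H !all_cat allxs all_runs.
  have [k0 [hk0 hk]] := off_nomove (H xs) xs (hseq m (rev xs)) (m * Dst n) alls hoff.
  have [o [ho lo]] := opt_exists _ _ _ hk.
  exists o; split => //; split; first exact: all_hseq.
  split => //; split.
    by rewrite mtf2_chain // ?sz // => z /hb ->.
  move: hk0; rewrite /H size_cat size_runs sz; move=> hk0.
  have : k0 <= n * (5 * n) by apply: (leq_trans hk0); rewrite leq_mul2l; apply/orP; right; lia.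
  lia.
Qed.

Lemma INRM (a b : nat) : INR (a * b) = (INR a * INR b)%R.
Proof. exact: mult_INR. Qed.
Lemma INRD (a b : nat) : INR (a + b) = (INR a + INR b)%R.
Proof. exact: plus_INR. Qed.
Lemma INRS (a : nat) : INR a.+1 = (INR a + 1)%R.
Proof. exact: S_INR. Qed.
Lemma INRle (a b : nat) : a <= b -> (INR a <= INR b)%R.
Proof. by move/leP; apply: le_INR. Qed.

Lemma INRk k : INR k.+1 = (INR k + 1)%R. Proof. exact: S_INR. Qed.
Lemma INR0' : INR 0 = 0%R. Proof. by []. Qed.


Theorem lemma11 (bits : nat -> bool) (c b : R) :
  (c < 5 / 2)%R ->
  exists (L sigma : seq nat),
    uniq L /\ all (fun x => x \in L) sigma /\
    exists opt : nat, is_OPT L sigma opt /\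
      (INR (mtf2_cost bits L sigma) > c * INR opt + b)%R.
Proof.
move=> hc.
set c' := Rmax c 0.
have hc' : (c' < 5/2)%R by apply: Rmax_lub_lt; lra.
have c0 : (0 <= c')%R := Rmax_r c 0.
have cc : (c <= c')%R := Rmax_l c 0.
have [n hN hN2] : exists2 n : nat, (1 <= INR n)%R & (6 * c' <= (5 - 2*c') * INR n)%R.
  have [n0 hn0] := INR_unbounded (6 * c' / (5 - 2 * c')).
  exists n0.+1; first by rewrite INRS; have := pos_INR n0; lra.
  have e : (6 * c' = (5 - 2*c') * (6 * c' / (5 - 2*c')))%R by field; lra.
  rewrite e; apply: Rmult_le_compat_l; first lra.
  rewrite INRS; lra.
have [m hm] := INR_unbounded (10 * c' * INR n * INR n + 2 * b).
have [L [sg [o [uq [al [ho [h1 h2]]]]]]] := main_nat bits n m.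
exists L, sg; split => //; split => //; exists o; split => //.
have e1 : 2 * Cst n = 5*n*n + 3*n by rewrite /Cst mulnDr sing2; lia.
have e2 : 2 * Dst n = 2*n*n + 6*n by rewrite /Dst mulnDr sing2 orun2; lia.
have h1' : m.+1 * (5*n*n+3*n) <= 2 * mtf2_cost bits L sg.
  by rewrite -e1 mulnCA leq_mul2l h1 orbT.
have h2' : 2 * o <= 10*n*n + m*(2*n*n+6*n).
  rewrite -e2 mulnCA; move: h2; rewrite -(leq_pmul2l (isT : 0 < 2)) mulnDr; lia.
move: (INRle _ _ h1') (INRle _ _ h2'); rewrite ?INRM ?INRD ?mult_INR ?plus_INR ?INRM ?INRD ?INRS ?INR0'.
move=> r1 r2.
have Y0 : (0 <= (INR o))%R := pos_INR o.
have M0 : (0 <= (INR m))%R := pos_INR m.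
have cy : (c * (INR o) <= c' * (INR o))%R by apply: Rmult_le_compat_r.
have P : (0 <= (INR n) * ((5 - 2*c') * (INR n) - 6 * c'))%R by apply: Rmult_le_pos; lra.
have K3 : (3 <= (5 - 2*c') * (INR n) * (INR n) + (3 - 6*c') * (INR n))%R by nra.
have MK : (0 <= (INR m) * ((5 - 2*c') * (INR n) * (INR n) + (3 - 6*c') * (INR n) - 3))%R by apply: Rmult_le_pos; lra.
have cY := Rmult_le_compat_l _ _ _ c0 r2.
nra.
Qed.
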